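(* Let $\psi\in\mathcal K$ have radius of convergence $R_\psi>0$ and Khinchin family $(Y_t)$. For $t\in(0,R_\psi)$ let $q(t)$ be the extinction probability of the Galton–Watson process with offspring distribution $Y_t$, and $q(0)=1$. Then $q$ is continuous on $[0,R_\psi)$.
   Context: $\mathcal K$ is the class of non-constant power series $f(z)=\sum_{n\ge0}a_nz^n$ with positive radius of convergence $R$, non-negative coefficients and $a_0>0$; its Khinchin family $(X_t)_{t\in[0,R)}$ is given by $\mathbf P(X_t=n)=a_nt^n/f(t)$ for $n\ge0$, $t\in(0,R)$, and $X_0\equiv0$ (so the process with offspring $Y_0$ is a single node and goes extinct, consistently with $q(0)=1$). The extinction probability is the probability that the Galton–Watson tree is finite. *)

(* Defs.v *)
From HB Require Import structures.
From mathcomp Require Import all_boot all_order all_algebra.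
From mathcomp Require Import all_classical all_reals all_analysis.
Set Implicit Arguments. Unset Strict Implicit. Unset Printing Implicit Defensive.
Import Order.TTheory GRing.Theory Num.Theory.
Import numFieldNormedType.Exports.
Local Open Scope classical_set_scope.
Local Open Scope ring_scope.

Section Defs.
Variable R : realType.

(* The class K: non-constant power series, nonnegative coefficients, a_0 > 0
   (positive ps_radius of convergence is a separate hypothesis). *)
Definition in_K (a : nat -> R) : Prop :=
  [/\ forall n, 0 <= a n, 0 < a 0%N & exists n, (0 < n)%N /\ 0 < a n].

(* ps_radius of convergence (restricted to nonnegative reals, which suffices
   since coefficients are nonnegative), as an extended real *)
Definition ps_radius (a : nat -> R) : \bar R :=
  ereal_sup [set t%:E | t in
     [set t : R | 0 <= t /\ cvgn (series (fun n => a n * t ^+ n)) ]].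

Definition psum (a : nat -> R) (t : R) : R := limn (series (fun n => a n * t ^+ n)).

Definition khinchin (a : nat -> R) (t : R) (n : nat) : R :=
  a n * t ^+ n / psum a t.

Fixpoint conv_pow (p : nat -> R) (j : nat) : nat -> R :=
  match j with
  | 0%N => fun k => (k == 0%N)%:R
  | j'.+1 => fun k => \sum_(i < k.+1) p i * conv_pow p j' (k - i)%N
  end.

(* law of the n-th generation size Z_n of the Galton-Watson process with
   offspring law p, started from one individual (Z_0 = 1) *)
Fixpoint gen_law (p : nat -> R) (n : nat) : nat -> R :=
  match n with
  | 0%N => fun k => (k == 1%N)%:R
  | n'.+1 => fun k => limn (series (fun j => gen_law p n' j * conv_pow p j k))
  end.

(* extinction probability: P(tree finite) = P(U_n {Z_n = 0}) = lim_n P(Z_n = 0)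
   (the events {Z_n = 0} are increasing) *)
Definition extinction_prob (p : nat -> R) : R := limn (fun n => gen_law p n 0%N).

Definition q_ext (a : nat -> R) (t : R) : R :=
  if t == 0 then 1 else extinction_prob (khinchin a t).

End Defs.

(* Main.v *)
Require Import Defs.
From HB Require Import structures.
From mathcomp Require Import all_boot all_order all_algebra.
From mathcomp Require Import all_classical all_reals all_analysis.
Import Order.TTheory GRing.Theory Num.Theory.
Import numFieldNormedType.Exports.
Local Open Scope classical_set_scope.
Local Open Scope ring_scope.
Set Implicit Arguments. Unset Strict Implicit. Unset Printing Implicit Defensive.
From mathcomp Require Import ring lra.


Section E.
Variable R : realType.
Local Open Scope ereal_scope.
Implicit Types u v : nat -> R.

Definition E (u : nat -> R) : \bar R := \sum_(k <oo) (u k)%:E.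

Lemma E_ge0 u : (forall k, (0 <= u k)%R) -> 0 <= E u.
Proof. by move=> u0; apply: nneseries_ge0 => k _ _; rewrite lee_fin. Qed.

Lemma E_le u v : (forall k, (0 <= u k)%R) -> (forall k, (u k <= v k)%R) -> E u <= E v.
Proof. by move=> u0 uv; apply: lee_nneseries => [k _ _|k _]; rewrite lee_fin. Qed.

Lemma E_lim u : (forall k, (0 <= u k)%R) -> E u < +oo ->
  cvgn (series u) /\ E u = (limn (series u))%:E.
Proof.
move=> u0 uoo; have cu := nnseries_is_cvg u0 uoo; split => //.
rewrite /E -EFin_lim //; congr (limn _); apply/funext => n /=.
by rewrite /series /= sumEFin.
Qed.

Lemma E_lim' u : (forall k, (0 <= u k)%R) -> cvgn (series u) ->
  E u = (limn (series u))%:E.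
Proof.
move=> u0 cu; rewrite /E -EFin_lim //; congr (limn _); apply/funext => n /=.
by rewrite /series /= sumEFin.
Qed.

Lemma E_fin u N : (forall k, (0 <= u k)%R) -> (forall k, (N <= k)%N -> u k = 0%R) ->
  E u = (\sum_(k < N) u k)%:E.
Proof.
move=> u0 uN; rewrite /E (nneseries_split 0 N); last by move=> k _; rewrite lee_fin.
rewrite add0n eseries0 ?adde0; last by move=> k kN _; rewrite uN.
by rewrite sumEFin big_mkord.
Qed.

Lemma E_term u m : (forall k, (0 <= u k)%R) -> (u m)%:E <= E u.
Proof.
move=> u0; apply: le_trans (nneseries_lim_ge m.+1 _); last by move=> k _ _; rewrite lee_fin.
by rewrite big_nat_recr //= leeDr // sume_ge0 // => k _; rewrite lee_fin.
Qed.

Lemma E_scale c u : (0 <= c)%R -> (forall k, (0 <= u k)%R) ->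
  E (fun k => c * u k)%R = c%:E * E u.
Proof.
move=> c0 u0; rewrite /E -nneseriesZl; last by move=> k _; rewrite lee_fin.
by apply: eq_eseriesr => k _; rewrite EFinM.
Qed.

Lemma E_add u v : (forall k, (0 <= u k)%R) -> (forall k, (0 <= v k)%R) ->
  E (fun k => u k + v k)%R = E u + E v.
Proof.
move=> u0 v0; rewrite /E -nneseriesD; last 2 first.
- by move=> k _ _; rewrite lee_fin.
- by move=> k _ _; rewrite lee_fin.
by apply: eq_eseriesr => k _; rewrite EFinD.
Qed.

End E.


Section Cauchy.
Variable R : realType.
Local Open Scope ereal_scope.
Implicit Types u v f g : nat -> R.

Lemma E_cauchy f g (G : R) : (forall k, (0 <= f k)%R) -> (forall k, (0 <= g k)%R) ->
  E g = G%:E ->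
  E (fun k => \sum_(i < k.+1) f i * g (k - i)%N)%R = G%:E * E f.
Proof.
move=> f0 g0 Eg.
pose h i k := if (i <= k)%N then (f i * g (k - i)%N)%:E else 0.
have h0 i k : 0 <= h i k by rewrite /h; case: ifP => // _; rewrite lee_fin mulr_ge0.
rewrite /E.
transitivity (\sum_(k <oo) \sum_(i <oo) h i k).
  apply: eq_eseriesr => k _; rewrite -sumEFin.
  rewrite (nneseries_split 0 k.+1); last by move=> *; exact: h0.
  rewrite add0n eseries0 ?adde0; last by move=> i ki _; rewrite /h leqNgt ki.
  by rewrite big_mkord; apply: eq_bigr => i _; rewrite /h -ltnS ltn_ord.
rewrite nneseries_interchange //.
transitivity (\sum_(i <oo) (G%:E * (f i)%:E)).
  apply: eq_eseriesr => i _.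
  rewrite (nneseries_split 0 i); last by move=> *; exact: h0.
  rewrite add0n big1_seq ?add0e; last by move=> k /andP[_]; rewrite mem_index_iota => /andP[_ ki]; rewrite /h leqNgt ki.
  rewrite -nneseries_addn //.
  transitivity (\sum_(k <oo) ((f i)%:E * (g k)%:E)).
    apply: eq_eseriesr => k _; rewrite /h leq_addl addnK EFinM //.
  rewrite nneseriesZl; last by move=> k _; rewrite lee_fin.
  by rewrite -/(E g) Eg muleC.
by rewrite nneseriesZl // => i _; rewrite lee_fin.
Qed.

End Cauchy.


Section GW.
Variable R : realType.
Variable p : nat -> R.
Hypothesis p0 : forall k, 0 <= p k.
Hypothesis p1 : E p = 1%:E.

Definition G (s : R) : R := fine (E (fun k => p k * s ^+ k)).

Lemma EG s : 0 <= s <= 1 -> E (fun k => p k * s ^+ k) = (G s)%:E /\ 0 <= G s <= 1.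
Proof.
move=> /andP[s0 s1].
have h0 k : 0 <= p k * s ^+ k by rewrite mulr_ge0 // exprn_ge0.
have hle : (E (fun k => (p k * s ^+ k)%R) <= 1%:E)%E.
  rewrite -p1; apply: E_le => // k; rewrite ler_piMr // exprn_ile1 //.
have hge := E_ge0 h0.
have fin : E (fun k => p k * s ^+ k) \is a fin_num.
  by rewrite ge0_fin_numE // (le_lt_trans hle) // ltry.
rewrite /G fineK //; split => //.
by rewrite -lee_fin -(lee_fin _ 1) fineK // hge.
Qed.

Lemma G1 : G 1 = 1.
Proof.
rewrite /G (_ : (fun k => _) = p) ?p1 //.
by apply/funext => k; rewrite expr1n mulr1.
Qed.

Lemma G_mono x y : 0 <= x -> x <= y -> y <= 1 -> G x <= G y.
Proof.
move=> x0 xy y1.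
have [Ex _] := EG (s:=x) (ltac:(apply/andP; split => //; exact: le_trans xy y1)).
have [Ey _] := EG (s:=y) (ltac:(apply/andP; split => //; exact: le_trans xy)).
rewrite -lee_fin -Ex -Ey; apply: E_le => k.
  by rewrite mulr_ge0 // exprn_ge0.
by rewrite ler_wpM2l // lerXn2r // nnegrE // (le_trans x0).
Qed.

Lemma iterG01 n s : 0 <= s <= 1 -> 0 <= iter n G s <= 1.
Proof.
elim: n => [//|n IH] hs /=.
by have [_ ->] := EG (IH hs).
Qed.

Lemma iterG1 n : iter n G 1 = 1.
Proof. by elim: n => //= n ->; rewrite G1. Qed.

Lemma conv_ge0 j k : 0 <= conv_pow p j k.
Proof.
elim: j k => [|j IH] k /=; first by case: (k == 0%N).
by apply: sumr_ge0 => i _; rewrite mulr_ge0.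
Qed.

Lemma E_conv j s : 0 <= s <= 1 ->
  E (fun k => conv_pow p j k * s ^+ k) = ((G s) ^+ j)%:E.
Proof.
move=> hs; have s0 : 0 <= s by case/andP: hs.
elim: j => [|j IH].
  rewrite (@E_fin _ _ 1).
  - by rewrite big_ord1 /= mulr1 expr0.
  - by move=> k /=; rewrite mulr_ge0 // ?exprn_ge0 //; case: (k == 0%N).
  - by move=> k; case: k => //= k _; rewrite mul0r.
have [EGs _] := EG hs.
transitivity (E (fun k => \sum_(i < k.+1) (p i * s ^+ i) * (conv_pow p j (k - i)%N * s ^+ (k - i)%N))).
  congr E; apply/funext => k /=; rewrite mulr_suml; apply: eq_bigr => i _.
  have ik : (i <= k)%N by rewrite -ltnS ltn_ord.
  have -> : s ^+ k = s ^+ i * s ^+ (k - i) by rewrite -exprD subnKC.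
  ring.
rewrite (@E_cauchy _ (fun i => p i * s ^+ i) (fun m => conv_pow p j m * s ^+ m) (G s ^+ j)) //.
- by rewrite EGs -EFinM exprSr.
- by move=> k; rewrite mulr_ge0 // exprn_ge0.
- by move=> k; rewrite mulr_ge0 ?conv_ge0 // exprn_ge0.
Qed.

End GW.


Lemma eterm (R : realType) (w : nat -> \bar R) m : (forall k, (0 <= w k)%E) ->
  (w m <= \sum_(k <oo) w k)%E.
Proof.
move=> w0; apply: le_trans (nneseries_lim_ge m.+1 _); last by move=> k _ _.
by rewrite big_nat_recr //= leeDr // sume_ge0.
Qed.

Section GW2.
Variable R : realType.
Variable p : nat -> R.
Hypothesis p0 : forall k, 0 <= p k.
Hypothesis p1 : E p = 1%:E.

Lemma gen_gf n : (forall k, 0 <= gen_law p n k) /\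
  forall s, 0 <= s <= 1 -> E (fun k => gen_law p n k * s ^+ k) = (iter n (G p) s)%:E.
Proof.
elim: n => [|n [gn0 IH]].
  split; first by move=> k /=; case: (k == 1%N).
  move=> s hs; have s0 : 0 <= s by case/andP: hs.
  rewrite (@E_fin _ _ 2).
  - by rewrite big_ord_recr big_ord1 /= mul0r add0r mul1r expr1.
  - by move=> k /=; rewrite mulr_ge0 // ?exprn_ge0 //; case: (k == 1%N).
  - by move=> [|[|k]] //= _; rewrite mul0r.
set D := fun j k => gen_law p n j * conv_pow p j k.
have D0 j k : 0 <= D j k by rewrite /D mulr_ge0 // conv_ge0.
have tot : (\sum_(k <oo) E (fun j => D j k) = 1%:E)%E.
  rewrite /E nneseries_interchange; last by move=> i j; rewrite lee_fin.
  transitivity (E (fun j => gen_law p n j * 1 ^+ j)).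
    apply: eq_eseriesr => j _.
    rewrite -/(E (fun k => D j k)) /D E_scale //; last by move=> k; exact: conv_ge0.
    rewrite (_ : conv_pow p j = (fun k => conv_pow p j k * 1 ^+ k)); last first.
      by apply/funext => k; rewrite expr1n mulr1.
    by rewrite E_conv // ?lexx ?ler01 // G1 // !expr1n mulr1.
  by rewrite IH ?lexx ?ler01 // iterG1.
have fin k : (E (fun j => D j k) < +oo)%E.
  apply: (le_lt_trans (@eterm _ (fun k => E (fun j => D j k)) k _)); first by move=> i; exact: E_ge0.
  by rewrite tot ltry.
have val k : (gen_law p n.+1 k)%:E = E (fun j => D j k).
  by have [_ ->] := E_lim (D0^~ k) (fin k).
have gn10 k : 0 <= gen_law p n.+1 k.
  by rewrite -lee_fin val; apply: E_ge0.
split => // s hs; have s0 : 0 <= s by case/andP: hs.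
have [EGs Gs01] := EG p0 p1 hs.
transitivity (\sum_(k <oo) ((s ^+ k)%:E * E (fun j => D j k)))%E.
  by apply: eq_eseriesr => k _; rewrite -val -EFinM mulrC.
transitivity (\sum_(k <oo) \sum_(j <oo) ((D j k * s ^+ k)%:E))%E.
  apply: eq_eseriesr => k _; rewrite /E -nneseriesZl; last by move=> j _; rewrite lee_fin.
  by apply: eq_eseriesr => j _; rewrite -EFinM mulrC.
rewrite nneseries_interchange; last by move=> i j; rewrite lee_fin mulr_ge0 // exprn_ge0.
transitivity (E (fun j => gen_law p n j * (G p s) ^+ j)).
  apply: eq_eseriesr => j _.
  transitivity (E (fun k => gen_law p n j * (conv_pow p j k * s ^+ k))).
    by apply: eq_eseriesr => k _; rewrite /D mulrA.
  rewrite E_scale //; last first.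
    by move=> k; rewrite mulr_ge0 ?conv_ge0 // exprn_ge0.
  by rewrite E_conv // -EFinM.
by rewrite IH // iterSr.
Qed.

Lemma gen_law0 n : gen_law p n 0 = iter n (G p) 0.
Proof.
have [g0 gf] := gen_gf n.
have := gf 0 (ltac:(by rewrite lexx ler01)).
rewrite (@E_fin _ _ 1).
- by rewrite big_ord1 expr0 mulr1 => -[].
- by move=> k; rewrite mulr_ge0 // exprn_ge0.
- by move=> [|k] //= _; rewrite expr0n mulr0.
Qed.

End GW2.


Section Conv.
Variable R : realType.

Definition cc (q s : R) k := (1-s)*q^+k + (s-q) - (1-q)*s^+k.

Lemma cc_eq q s k : cc q s k =
  (1-s)*(s-q)*(\sum_(i<k) (s^+i - s^+(k.-1-i) * q^+i)).
Proof.
have hA := subrXX s q k; have hB := subrXX 1 s k.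
set A := \sum_(i < k) _ in hA; set B := \sum_(i < k) _ in hB.
have -> : \sum_(i<k) (s^+i - s^+(k.-1-i) * q^+i) = B - A.
  rewrite /A /B -sumrB; apply: eq_bigr => i _; by rewrite expr1n mul1r.
transitivity ((s-q)*((1-s)*B) - (1-s)*((s-q)*A)); last by ring.
rewrite -hA -hB expr1n /cc; ring.
Qed.

Lemma cc_ge0 q s k : 0 <= q -> q <= s -> s <= 1 -> 0 <= cc q s k.
Proof.
move=> q0 qs s1; have s0 : 0 <= s by apply: le_trans qs.
rewrite cc_eq mulr_ge0 ?mulr_ge0 ?subr_ge0 //.
apply: sumr_ge0 => i _; rewrite subr_ge0.
have ik : (i <= k.-1)%N by rewrite -ltnS prednK ?ltn_ord // (leq_ltn_trans _ (ltn_ord i)).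
apply: (@le_trans _ _ (s ^+ k.-1)).
  rewrite -{2}(subnK ik) exprD ler_wpM2l ?exprn_ge0 //.
  by rewrite lerXn2r // nnegrE.
by rewrite ler_wiXn2l.
Qed.

Lemma cc_gt0 q s k : 0 <= q -> q < s -> s < 1 -> (2 <= k)%N -> 0 < cc q s k.
Proof.
move=> q0 qs s1 k2; have s0 : 0 <= s by apply: le_trans (ltW qs).
rewrite cc_eq mulr_gt0 ?mulr_gt0 ?subr_gt0 //.
case: k k2 => [|k] // k2.
rewrite big_ord_recl /= subn0 expr0 mulr1.
apply: (@lt_le_trans _ _ (1 - s ^+ k + 0)).
  rewrite addr0 subr_gt0 exprn_ilt1 //; by case: k k2.
rewrite lerD2l; apply: sumr_ge0 => i _; rewrite subr_ge0.
have ik : (bump 0 i <= k)%N by rewrite /bump /= add1n ltn_ord.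
apply: (@le_trans _ _ (s ^+ k)).
  have -> : s ^+ k = s^+(k - bump 0 i) * s^+(bump 0 i) by rewrite -exprD subnK.
  rewrite ler_wpM2l ?exprn_ge0 //.
  by rewrite lerXn2r // ?nnegrE // ltW.
by rewrite ler_wiXn2l // ?ltW.
Qed.

End Conv.


Section GW3.
Variable R : realType.
Variable p : nat -> R.
Hypothesis p0 : forall k, 0 <= p k.
Hypothesis p1 : E p = 1%:E.

Lemma G_three q s m : 0 <= q -> q < s -> s < 1 ->
  (1-q) * G p s + p m * cc q s m <= (1-s) * G p q + (s - q).
Proof.
move=> q0 qs s1; have s0 : 0 <= s by apply: le_trans (ltW qs).
have q1 : q < 1 by apply: lt_trans s1.
have [EGs _] := EG p0 p1 (s:=s) (ltac:(rewrite s0 ltW //)).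
have [EGq _] := EG p0 p1 (s:=q) (ltac:(rewrite q0 ltW //)).
have c0 k : 0 <= cc q s k by apply: cc_ge0 => //; apply: ltW.
have eq : E (fun k => (1-q) * (p k * s ^+ k) + p k * cc q s k)
        = E (fun k => (1-s) * (p k * q ^+ k) + (s - q) * p k).
  congr E; apply/funext => k; rewrite /cc; ring.
have sq : 0 <= s - q by rewrite subr_ge0 ltW.
have s1' : 0 <= 1 - s by rewrite subr_ge0 ltW.
have q1' : 0 <= 1 - q by rewrite subr_ge0 ltW.
rewrite E_add ?E_add in eq; try by (try move=> k); rewrite ?mulr_ge0 ?exprn_ge0.
rewrite !E_scale ?EGs ?EGq ?p1 in eq; try by (try move=> k); rewrite ?mulr_ge0 ?exprn_ge0.
have hm := E_term m (fun k => mulr_ge0 (p0 k) (c0 k)).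
rewrite -lee_fin EFinD.
apply: (le_trans (leeD2l _ hm)).
by rewrite eq mule1 -EFinM -EFinD.
Qed.

Lemma G_lt Q s m : (2 <= m)%N -> 0 < p m -> 0 <= Q -> G p Q = Q -> Q < s -> s < 1 ->
  G p s < s.
Proof.
move=> m2 pm Q0 GQ Qs s1.
have h := G_three m Q0 Qs s1.
have cm := cc_gt0 Q0 Qs s1 m2.
have pc : 0 < p m * cc Q s m by apply: mulr_gt0.
rewrite GQ in h.
have Q1 : 0 < 1 - Q by rewrite subr_gt0 (lt_trans Qs).
have : (1 - Q) * G p s < (1 - Q) * s by nra.
by rewrite ltr_pM2l.
Qed.

Lemma G_lin Q : (forall k, (2 <= k)%N -> p k = 0) -> 0 < p 0%N ->
  0 <= Q <= 1 -> G p Q = Q -> Q = 1.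
Proof.
move=> pk pp hQ GQ.
have lin x : 0 <= x <= 1 -> G p x = p 0%N + p 1%N * x.
  move=> hx; have [EGx _] := EG p0 p1 hx.
  have hx0 : 0 <= x by case/andP: hx.
  rewrite (@E_fin _ _ 2) in EGx.
  - by case: EGx => <-; rewrite big_ord_recr big_ord1 /= expr0 mulr1 expr1.
  - by move=> k; rewrite mulr_ge0 ?exprn_ge0.
  - by move=> k k2; rewrite pk // mul0r.
have h1 := G1 p1; rewrite lin ?lexx ?ler01 // mulr1 in h1.
rewrite lin // in GQ.
have : p 0%N * (1 - Q) = 0 by rewrite mulrBr mulr1; nra.
move/eqP; rewrite mulf_eq0 gt_eqF //= subr_eq0 => /eqP <-//.
Qed.

End GW3.


Section Psi.
Variable R : realType.
Variable a : nat -> R.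
Hypothesis a0 : forall k, 0 <= a k.
Hypothesis apos : 0 < a 0%N.
Local Notation Rad := (ps_radius a).
Local Notation psi := (psum a).

Lemma between (x : R) (X : \bar R) : (x%:E < X)%E -> exists y, x < y /\ (y%:E < X)%E.
Proof.
case: X => [r||] //=.
  rewrite lte_fin => xr; exists ((x + r) / 2); split; rewrite ?lte_fin; lra.
by move=> _; exists (x + 1); split; rewrite ?ltry //; lra.
Qed.

Lemma Efin x : 0 <= x -> (x%:E < Rad)%E -> (E (fun k => (a k * x ^+ k)%R) < +oo)%E.
Proof.
move=> x0 /ereal_sup_gt [_ [t [t0 ct] <-]]; rewrite lte_fin => xt.
have h0 k : 0 <= a k * t ^+ k by rewrite mulr_ge0 // exprn_ge0.
apply: (le_lt_trans (E_le (v := fun k => a k * t ^+ k) _ _)).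
- by move=> k; rewrite mulr_ge0 // exprn_ge0.
- by move=> k; rewrite ler_wpM2l // lerXn2r // ?nnegrE // ltW.
by rewrite (E_lim' h0 ct) ltry.
Qed.

Lemma Epsi x : 0 <= x -> (x%:E < Rad)%E -> E (fun k => a k * x ^+ k) = (psi x)%:E.
Proof.
move=> x0 xR; have h0 k : 0 <= a k * x ^+ k by rewrite mulr_ge0 // exprn_ge0.
by have [_ ->] := E_lim h0 (Efin x0 xR).
Qed.

Lemma psi_ge x : 0 <= x -> (x%:E < Rad)%E -> a 0%N <= psi x.
Proof.
move=> x0 xR; rewrite -lee_fin -Epsi //.
have := E_term 0 (fun k => mulr_ge0 (a0 k) (exprn_ge0 k x0)).
by rewrite expr0 mulr1.
Qed.

Lemma psi_gt0 x : 0 <= x -> (x%:E < Rad)%E -> 0 < psi x.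
Proof. by move=> x0 xR; apply: lt_le_trans (psi_ge x0 xR). Qed.

Lemma psi_mono x y : 0 <= x -> x <= y -> (y%:E < Rad)%E -> psi x <= psi y.
Proof.
move=> x0 xy yR; have y0 : 0 <= y by apply: le_trans xy.
have xR : (x%:E < Rad)%E by apply: le_lt_trans yR; rewrite lee_fin.
rewrite -lee_fin -!Epsi //; apply: E_le => k.
  by rewrite mulr_ge0 // exprn_ge0.
by rewrite ler_wpM2l // lerXn2r // nnegrE.
Qed.

Lemma Ediff x y : 0 <= x -> x <= y -> (y%:E < Rad)%E ->
  E (fun k => a k * (y ^+ k - x ^+ k)) = (psi y - psi x)%:E.
Proof.
move=> x0 xy yR; have y0 : 0 <= y by apply: le_trans xy.
have xR : (x%:E < Rad)%E by apply: le_lt_trans yR; rewrite lee_fin.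
have d0 k : 0 <= a k * (y ^+ k - x ^+ k).
  by rewrite mulr_ge0 // subr_ge0 lerXn2r // nnegrE.
have e : E (fun k => a k * (y ^+ k - x ^+ k) + a k * x ^+ k) = (psi y)%:E.
  rewrite -Epsi //; congr E; apply/funext => k; ring.
rewrite E_add // ?Epsi // in e; last by move=> k; rewrite mulr_ge0 // exprn_ge0.
have fin : E (fun k => a k * (y ^+ k - x ^+ k)) \is a fin_num.
  rewrite ge0_fin_numE ?E_ge0 //.
  apply: le_lt_trans (Efin y0 yR); rewrite -/(E _).
  apply: E_le => // k; rewrite ler_wpM2l // lerBlDr lerDl exprn_ge0 //.
move: e; rewrite -(fineK fin) -EFinD => -[<-]; rewrite addrK //.
Qed.

Lemma pow_slope (x y r r' : R) k : 0 <= x -> x <= y -> y <= r -> r <= r' ->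
  (y ^+ k - x ^+ k) * (r' - r) <= (r' ^+ k - r ^+ k) * (y - x).
Proof.
move=> x0 xy yr rr'.
have y0 : 0 <= y by apply: le_trans xy.
have r0 : 0 <= r by apply: le_trans yr.
have r'0 : 0 <= r' by apply: le_trans rr'.
rewrite !subrXX.
rewrite mulrAC [X in _ <= X]mulrAC (mulrC (r' - r)) -!mulrA.
apply: ler_wpM2l; first by rewrite subr_ge0.
apply: ler_wpM2l; first by rewrite subr_ge0.
apply: ler_sum => i _; apply: ler_pM; rewrite ?exprn_ge0 //.
  by apply: lerXn2r; rewrite ?nnegrE //; exact: le_trans yr rr'.
by apply: lerXn2r; rewrite ?nnegrE //; exact: le_trans xy yr.
Qed.

Lemma psi_slope x y r r' : 0 <= x -> x <= y -> y <= r -> r <= r' -> (r'%:E < Rad)%E ->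
  (psi y - psi x) * (r' - r) <= (psi r' - psi r) * (y - x).
Proof.
move=> x0 xy yr rr' r'R.
have y0 : 0 <= y by apply: le_trans xy.
have r0 : 0 <= r by apply: le_trans yr.
have yR : (y%:E < Rad)%E by apply: le_lt_trans r'R; rewrite lee_fin (le_trans yr).
have pm u v k : 0 <= u -> u <= v -> 0 <= a k * (v^+k - u^+k).
  by move=> u0 uv; rewrite mulr_ge0 // subr_ge0 lerXn2r // nnegrE (le_trans u0).
rewrite -lee_fin !EFinM -Ediff // -Ediff //.
rewrite muleC -E_scale ?subr_ge0 //; last by move=> k; apply: pm.
rewrite muleC -E_scale ?subr_ge0 //; last by move=> k; apply: pm.
apply: E_le => k.
  by rewrite mulr_ge0 ?pm ?subr_ge0.
rewrite mulrCA [X in _ <= X]mulrCA; apply: ler_wpM2l => //.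
by rewrite mulrC [X in _ <= X]mulrC pow_slope.
Qed.

End Psi.


Definition FF (R : realType) (a : nat -> R) (t s : R) := psum a (t * s) / psum a t.

Section Lip.
Variable R : realType.
Variable a : nat -> R.
Hypothesis a0 : forall k, 0 <= a k.
Hypothesis apos : 0 < a 0%N.
Local Notation Rad := (ps_radius a).
Local Notation psi := (psum a).
Variables r r' : R.
Hypothesis r0 : 0 <= r.
Hypothesis rr' : r < r'.
Hypothesis r'R : (r'%:E < Rad)%E.

Let rR : (r%:E < Rad)%E.
Proof. by apply: le_lt_trans r'R; rewrite lee_fin ltW. Qed.

Definition LL := (psi r' - psi r) / (r' - r).

Lemma LL_ge0 : 0 <= LL.
Proof.
rewrite /LL divr_ge0 // subr_ge0; last exact: ltW.
by apply: (psi_mono a0) => //; exact: ltW.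
Qed.

Lemma in_R x : 0 <= x -> x <= r -> (x%:E < Rad)%E.
Proof. by move=> x0 xr; apply: le_lt_trans rR; rewrite lee_fin. Qed.

Lemma Lip x y : 0 <= x -> x <= r -> 0 <= y -> y <= r -> `|psi x - psi y| <= LL * `|x - y|.
Proof.
wlog xy : x y / x <= y.
  move=> h x0 xr y0 yr; have [xy|yx] := leP x y; first exact: h.
  by rewrite distrC (distrC x); apply: h => //; apply: ltW.
move=> x0 xr y0 yr.
rewrite distrC (distrC x) !ger0_norm ?subr_ge0 //; last first.
  by apply: (psi_mono a0) => //; apply: in_R => //; apply: le_trans yr.
have h := psi_slope a0 x0 xy yr (ltW rr') r'R.
by rewrite /LL mulrAC ler_pdivlMr ?subr_gt0 //.
Qed.

Lemma psi_pos x : 0 <= x -> x <= r -> a 0%N <= psi x.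
Proof. by move=> x0 xr; apply: (psi_ge a0) => //; apply: in_R. Qed.

Lemma FF01 t s : 0 <= t -> t <= r -> 0 <= s -> s <= 1 -> 0 <= FF a t s <= 1.
Proof.
move=> t0 tr s0 s1.
have pt : 0 < psi t by apply: lt_le_trans (psi_pos t0 tr).
have ts0 : 0 <= t * s by apply: mulr_ge0.
have tst : t * s <= t by rewrite ler_piMr.
have pts : 0 < psi (t * s) by apply: lt_le_trans (psi_pos ts0 (le_trans tst tr)).
rewrite /FF; apply/andP; split; first by rewrite divr_ge0 // ltW.
rewrite ler_pdivrMr // mul1r.
by apply: (psi_mono a0) => //; apply: in_R.
Qed.

Lemma FF_mono t s s' : 0 <= t -> t <= r -> 0 <= s -> s <= s' -> s' <= 1 -> FF a t s <= FF a t s'.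
Proof.
move=> t0 tr s0 ss' s'1.
have pt : 0 < psi t by apply: lt_le_trans (psi_pos t0 tr).
rewrite /FF ler_pM2r ?invr_gt0 //; apply: (psi_mono a0).
- by apply: mulr_ge0.
- by apply: ler_wpM2l.
- apply: in_R; first by apply: mulr_ge0 => //; apply: le_trans ss'.
  by apply: le_trans tr; rewrite ler_piMr // (le_trans s0).
Qed.

Definition K1 := LL * r / a 0%N.
Definition K2 := 2 * psi r * LL / (a 0%N ^+ 2).

Lemma K1_ge0 : 0 <= K1.
Proof. apply: divr_ge0; [exact: mulr_ge0 LL_ge0 r0 | exact: ltW]. Qed.

Lemma K2_ge0 : 0 <= K2.
Proof.
apply: divr_ge0; last exact: exprn_ge0 (ltW apos).
apply: mulr_ge0 LL_ge0; apply: mulr_ge0 => //.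
exact: ltW (lt_le_trans apos (psi_pos r0 (lexx r))).
Qed.

Lemma FF_s t s s' : 0 <= t -> t <= r -> 0 <= s -> s <= 1 -> 0 <= s' -> s' <= 1 ->
  `|FF a t s - FF a t s'| <= K1 * `|s - s'|.
Proof.
move=> t0 tr s0 s1 s'0 s'1.
have pt := psi_pos t0 tr.
have pt0 : 0 < psi t by apply: lt_le_trans pt.
have tsr u : 0 <= u -> u <= 1 -> t * u <= r.
  by move=> u0 u1; apply: le_trans tr; rewrite ler_piMr.
rewrite /FF -mulrBl normrM normfV (gtr0_norm pt0).
have hL := Lip (mulr_ge0 t0 s0) (tsr _ s0 s1) (mulr_ge0 t0 s'0) (tsr _ s'0 s'1).
rewrite -mulrBr normrM (ger0_norm t0) in hL.
apply: (@le_trans _ _ (LL * (t * `|s - s'|) / a 0%N)).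
  rewrite ler_pdivlMr // mulrAC -mulrA; apply: le_trans _ hL.
  by rewrite ler_piMr ?normr_ge0 // ler_pdivrMr // mul1r.
have -> : LL * (t * `|s - s'|) / a 0%N = (LL / a 0%N) * (t * `|s - s'|) by ring.
have -> : K1 * `|s - s'| = (LL / a 0%N) * (r * `|s - s'|) by rewrite /K1; ring.
apply: ler_wpM2l; first by apply: divr_ge0; [exact: LL_ge0 | exact: ltW].
by apply: ler_wpM2r.
Qed.

Lemma FF_t t t' s : 0 <= t -> t <= r -> 0 <= t' -> t' <= r -> 0 <= s -> s <= 1 ->
  `|FF a t s - FF a t' s| <= K2 * `|t - t'|.
Proof.
move=> t0 tr t'0 t'r s0 s1.
have tsr u : 0 <= u -> u <= r -> u * s <= r.
  by move=> u0 ur; apply: le_trans ur; rewrite ler_piMr.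
have ts0 : 0 <= t * s by apply: mulr_ge0.
have t's0 : 0 <= t' * s by apply: mulr_ge0.
have Pa := psi_pos t0 tr; have P'a := psi_pos t'0 t'r.
have P0 : 0 < psi t by apply: lt_le_trans Pa.
have P'0 : 0 < psi t' by apply: lt_le_trans P'a.
have BM : psi (t' * s) <= psi r by apply: (psi_mono a0) => //; apply: tsr.
have P'M : psi t' <= psi r by apply: (psi_mono a0).
have B0 : 0 <= psi (t' * s) by apply: le_trans (psi_pos t's0 (tsr _ t'0 t'r)); exact: ltW.
have hAB := Lip ts0 (tsr _ t0 tr) t's0 (tsr _ t'0 t'r).
rewrite -mulrBl normrM (ger0_norm s0) in hAB.
have hPP := Lip t'0 t'r t0 tr.
have e : FF a t s - FF a t' s =
  ((psi (t * s) - psi (t' * s)) * psi t' + psi (t' * s) * (psi t' - psi t)) / (psi t * psi t').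
  rewrite /FF; field; apply/andP; split; exact: lt0r_neq0.
rewrite e normrM normfV (gtr0_norm (mulr_gt0 P0 P'0)).
have num : `|(psi (t * s) - psi (t' * s)) * psi t' + psi (t' * s) * (psi t' - psi t)|
    <= 2 * psi r * LL * `|t - t'|.
  apply: le_trans (ler_normD _ _) _.
  rewrite !normrM (gtr0_norm P'0) (ger0_norm B0).
  have h1 : `|psi (t * s) - psi (t' * s)| * psi t' <= LL * `|t - t'| * psi r.
    apply: ler_pM => //; first exact: ltW.
    apply: le_trans hAB _; rewrite mulrA ler_piMr // mulr_ge0 // ?LL_ge0 //.
  have h2 : psi (t' * s) * `|psi t' - psi t| <= psi r * (LL * `|t - t'|).
    by apply: ler_pM => //; rewrite (distrC t).
  have -> : 2 * psi r * LL * `|t - t'| = LL * `|t - t'| * psi r + psi r * (LL * `|t - t'|) by ring.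
  exact: lerD.
have den : a 0%N ^+ 2 <= psi t * psi t' by rewrite expr2; apply: ler_pM => //; exact: ltW.
apply: (@le_trans _ _ (2 * psi r * LL * `|t - t'| / (psi t * psi t'))).
  by apply: ler_wpM2r => //; rewrite invr_ge0 ltW // mulr_gt0.
have -> : K2 * `|t - t'| = 2 * psi r * LL * `|t - t'| / (a 0%N ^+ 2) by rewrite /K2; ring.
apply: ler_wpM2l.
  apply: mulr_ge0 => //; apply: mulr_ge0; last exact: LL_ge0.
  apply: mulr_ge0 => //; exact: le_trans (ltW P0) (psi_mono a0 t0 tr rR).
by rewrite lef_pV2 // ?posrE ?exprn_gt0 // mulr_gt0.
Qed.

End Lip.


Section Link.
Variable R : realType.
Variable a : nat -> R.
Hypothesis a0 : forall k, 0 <= a k.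
Hypothesis apos : 0 < a 0%N.
Local Notation Rad := (ps_radius a).
Local Notation psi := (psum a).

Lemma khin_props t : 0 < t -> (t%:E < Rad)%E ->
  [/\ forall k, 0 <= khinchin a t k, E (khinchin a t) = 1%:E &
      forall s, 0 <= s <= 1 -> G (khinchin a t) s = FF a t s].
Proof.
move=> t0 tR.
have P0 : 0 < psi t by apply: (psi_gt0 a0 apos) => //; exact: ltW.
have kE k : khinchin a t k = (psi t)^-1 * (a k * t ^+ k) by rewrite /khinchin mulrC.
have h0 k : 0 <= a k * t ^+ k by rewrite mulr_ge0 // exprn_ge0 // ltW.
have k0 k : 0 <= khinchin a t k by rewrite kE mulr_ge0 // invr_ge0 ltW.
split => //.
  rewrite (_ : khinchin a t = fun k => (psi t)^-1 * (a k * t ^+ k)); last first.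
    by apply/funext => k; rewrite kE.
  rewrite E_scale ?invr_ge0 ?ltW // Epsi // ?ltW // -EFinM mulVf //.
  exact: lt0r_neq0.
move=> s /andP[s0 s1].
have ts0 : 0 <= t * s by rewrite mulr_ge0 // ltW.
have tsR : ((t * s)%:E < Rad)%E.
  by apply: le_lt_trans tR; rewrite lee_fin ler_piMr // ltW.
rewrite /G (_ : (fun k => _) = fun k => (psi t)^-1 * (a k * (t * s) ^+ k)); last first.
  by apply/funext => k; rewrite kE exprMn; ring.
rewrite E_scale ?invr_ge0 ?ltW //; last by move=> k; rewrite mulr_ge0 // exprn_ge0.
by rewrite Epsi // -EFinM /= /FF mulrC.
Qed.

Lemma gen_iter t n : 0 < t -> (t%:E < Rad)%E ->
  gen_law (khinchin a t) n 0 = iter n (FF a t) 0.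
Proof.
move=> t0 tR; have [k0 k1 GF] := khin_props t0 tR.
rewrite gen_law0 //.
suff : iter n (G (khinchin a t)) 0 = iter n (FF a t) 0 /\ 0 <= iter n (G (khinchin a t)) 0 <= 1.
  by case.
elim: n => [|n [IH1 IH2]] /=; first by split => //; rewrite ler01 andbT.
rewrite GF // IH1; split => //.
by have := iterG01 k0 k1 n.+1 (s := 0) (ltac:(by rewrite ler01 andbT)); rewrite /= GF // IH1.
Qed.

Lemma q_iter t : 0 < t -> (t%:E < Rad)%E ->
  q_ext a t = limn (fun n => iter n (FF a t) 0).
Proof.
move=> t0 tR; rewrite /q_ext gt_eqF //= /extinction_prob.
have -> // : (fun n => gen_law (khinchin a t) n 0) = (fun n => iter n (FF a t) 0).
by apply/funext => n; rewrite gen_iter.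
Qed.

End Link.


Section Seq.
Variable R : realType.
Variable a : nat -> R.
Hypothesis a0 : forall k, 0 <= a k.
Hypothesis apos : 0 < a 0%N.
Local Notation Rad := (ps_radius a).
Local Notation psi := (psum a).
Variables r r' : R.
Hypothesis r0 : 0 <= r.
Hypothesis rr' : r < r'.
Hypothesis r'R : (r'%:E < Rad)%E.

Definition gg t n := iter n (FF a t) 0.
Definition QQ t := limn (gg t).

Lemma g01 t n : 0 <= t -> t <= r -> 0 <= gg t n <= 1.
Proof.
move=> t0 tr; elim: n => [|n /andP[h0 h1]] /=; first by rewrite lexx ler01.
exact: (FF01 a0 apos rr' r'R t0 tr h0 h1).
Qed.

Lemma g_mono t n : 0 <= t -> t <= r -> gg t n <= gg t n.+1.
Proof.
move=> t0 tr; elim: n => [|n IH].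
  by have /andP[] := g01 1 t0 tr.
have /andP[h0 h1] := g01 n t0 tr; have /andP[h0' h1'] := g01 n.+1 t0 tr.
exact: (FF_mono a0 apos rr' r'R t0 tr h0 IH h1').
Qed.

Lemma g_nd t : 0 <= t -> t <= r -> {homo gg t : n m / (n <= m)%N >-> n <= m}.
Proof. by move=> t0 tr; apply/nondecreasing_seqP => n; exact: g_mono. Qed.

Lemma g_cvg t : 0 <= t -> t <= r -> cvgn (gg t).
Proof.
move=> t0 tr; apply: nondecreasing_is_cvgn; first exact: g_nd.
by exists 1 => _ [n _ <-]; have /andP[] := g01 n t0 tr.
Qed.

Lemma g_le_Q t n : 0 <= t -> t <= r -> gg t n <= QQ t.
Proof. by move=> t0 tr; apply: nondecreasing_cvgn_le; [exact: g_nd | exact: g_cvg]. Qed.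

Lemma Q01 t : 0 <= t -> t <= r -> 0 <= QQ t <= 1.
Proof.
move=> t0 tr; apply/andP; split; first exact: (g_le_Q 0 t0 tr).
apply: limr_le; first exact: g_cvg.
by apply: nearW => n; have /andP[] := g01 n t0 tr.
Qed.

Lemma Q_approx t e : 0 <= t -> t <= r -> 0 < e -> exists n, QQ t - e < gg t n.
Proof.
move=> t0 tr e0.
have /cvgrPdist_lt/(_ e e0) := g_cvg t0 tr.
move=> [N _ hN]; exists N; have := hN N (leqnn N) => /=.
have := g_le_Q N t0 tr.
rewrite -/(QQ t) => h1 h2.
rewrite ger0_norm ?subr_ge0 // in h2; lra.
Qed.

Lemma Q_le t s : 0 <= t -> t <= r -> 0 <= s -> s <= 1 -> FF a t s <= s -> QQ t <= s.
Proof.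
move=> t0 tr s0 s1 Fs.
apply: limr_le; first exact: g_cvg.
apply: nearW => n; elim: n => [//|n IH] /=.
have /andP[h0 h1] := g01 n t0 tr.
apply: le_trans Fs.
exact: (FF_mono a0 apos rr' r'R t0 tr h0 IH s1).
Qed.

Lemma Q_fix t : 0 <= t -> t <= r -> FF a t (QQ t) = QQ t.
Proof.
move=> t0 tr.
have /andP[Q0 Q1] := Q01 t0 tr.
have K10 := K1_ge0 a0 apos r0 rr' r'R.
apply/eqP; rewrite -subr_eq0 -normr_eq0; apply/eqP.
apply/eqP; rewrite eq_le normr_ge0 andbT; apply/negP => /negP; rewrite -ltNge => d0.
set d := `|_| in d0.
have e0 : 0 < d / (2 * (K1 a r r' + 1)) by apply: divr_gt0 => //; lra.
have [n hn] := Q_approx t0 tr e0.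
have /andP[g0 g1] := g01 n t0 tr.
have gQ := g_le_Q n t0 tr; have gQ' := g_le_Q n.+1 t0 tr.
have gn := g_mono n t0 tr.
have h := FF_s a0 apos r0 rr' r'R t0 tr Q0 Q1 g0 g1.
have : d <= K1 a r r' * `|QQ t - gg t n| + `|gg t n.+1 - QQ t|.
  have e : gg t n.+1 = FF a t (gg t n) by [].
  rewrite /d e (_ : FF a t (QQ t) - QQ t = (FF a t (QQ t) - FF a t (gg t n)) + (FF a t (gg t n) - QQ t)); last by ring.
  by apply: le_trans (ler_normD _ _) _; apply: lerD.
rewrite ger0_norm ?subr_ge0 // ler0_norm ?subr_le0 //.
set eps := d / (2 * (K1 a r r' + 1)) in hn e0.
have deps : d = eps * (2 * (K1 a r r' + 1)) by rewrite /eps mulfVK //; lra.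
move=> h2; nra.
Qed.

Lemma g_lip n : exists C, 0 <= C /\ forall t t', 0 <= t -> t <= r -> 0 <= t' -> t' <= r ->
  `|gg t n - gg t' n| <= C * `|t - t'|.
Proof.
have K10 := K1_ge0 a0 apos r0 rr' r'R.
have K20 := K2_ge0 a0 apos r0 rr' r'R.
elim: n => [|n [C [C0 IH]]].
  by exists 0; split => // t t' *; rewrite /= subrr normr0 mul0r.
exists (K1 a r r' * C + K2 a r r'); split; first by apply: addr_ge0 => //; apply: mulr_ge0.
move=> t t' t0 tr t'0 t'r /=.
have /andP[g0 g1] := g01 n t0 tr; have /andP[g0' g1'] := g01 n t'0 t'r.
have -> : FF a t (gg t n) - FF a t' (gg t' n) =
  (FF a t (gg t n) - FF a t (gg t' n)) + (FF a t (gg t' n) - FF a t' (gg t' n)) by ring.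
apply: le_trans (ler_normD _ _) _.
rewrite mulrDl; apply: lerD.
  apply: le_trans (FF_s a0 apos r0 rr' r'R t0 tr g0 g1 g0' g1') _.
  rewrite -[X in _ <= X]mulrA; apply: (ler_wpM2l K10); exact: IH.
exact: (FF_t a0 apos r0 rr' r'R t0 tr t'0 t'r g0' g1').
Qed.

End Seq.


Unset Implicit Arguments.

Theorem proposition6p5 (R : realType) (a : nat -> R) :
  in_K a -> (0 < ps_radius a)%E ->
  {within [set t : R | 0 <= t /\ (t%:E < ps_radius a)%E], continuous (q_ext a)}.
Proof.
move=> [a0 apos [m0 [m0pos am0]]] Rpos.
apply/subspace_continuousP => t0 [t00 t0R].
apply/cvgrPdist_lt => e e0.
rewrite near_withinE.
have [r [t0r rR]] := between t0R.
have [r' [rr' r'R]] := between rR.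
have r0 : 0 <= r by apply: le_trans (ltW t0r).
pose P (d : R) := 0 < d /\ forall t, 0 <= t -> t <= r -> `|t0 - t| < d -> `|q_ext a t0 - q_ext a t| < e.
suff [d [d0 hd]] : exists d, P d.
  apply/nbhs_ballP; exists (Num.min d (r - t0)) => /=.
    by rewrite lt_min d0 subr_gt0.
  move=> t hb [t_ge0 tR].
  rewrite /from_subspace.
  move: hb; rewrite /ball /= lt_min => /andP[h1 h2].
  apply: hd => //.
  by move: h2; rewrite distrC ltr_norml => /andP[_ h]; lra.
have qQ t : 0 < t -> t <= r -> q_ext a t = QQ a t.
  move=> t0' tr; rewrite (q_iter a0 apos t0') //.
  by apply: le_lt_trans rR; rewrite lee_fin.
have [t0z|t0p] : t0 = 0 \/ 0 < t0.
  by move: t00; rewrite le_eqVlt => /orP[/eqP ->|->]; [left|right].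
  subst t0.
  have LL0 := LL_ge0 a0 r0 rr' r'R.
  exists (Num.min r (e * a 0%N / (LL a r r' + 1))); split.
    by rewrite lt_min t0r /= divr_gt0 ?mulr_gt0 //; lra.
  move=> t t_ge0 tr; rewrite sub0r normrN (ger0_norm t_ge0) lt_min => /andP[_ ht].
  have [->|tp] : t = 0 \/ 0 < t.
    by move: t_ge0; rewrite le_eqVlt => /orP[/eqP ->|->]; [left|right].
    by rewrite subrr normr0.
  have -> : q_ext a 0 = 1 by rewrite /q_ext eqxx.
  rewrite qQ //.
  have /andP[Q0 Q1] := Q01 a0 apos rr' r'R (ltW tp) tr.
  have g1 := g_le_Q a0 apos rr' r'R 1 (ltW tp) tr.
  rewrite /gg /= /FF mulr0 in g1.
  have hL := Lip a0 rr' r'R (ltW tp) tr (lexx 0) r0.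
  rewrite subr0 (ger0_norm (ltW tp)) in hL.
  have Pa := psi_pos a0 rr' r'R (ltW tp) tr.
  have P0 : 0 < psum a t by apply: lt_le_trans Pa.
  have hQP : psum a 0 <= QQ a t * psum a t by rewrite -ler_pdivrMr.
  have hPP : psum a t - psum a 0 <= LL a r r' * t.
    by apply: le_trans hL; apply: ler_norm.
  have ht' : t * (LL a r r' + 1) < e * a 0%N by rewrite -ltr_pdivlMr //; lra.
  rewrite ger0_norm ?subr_ge0 //.
  have : (1 - QQ a t) * psum a t < e * psum a t.
    apply: (le_lt_trans (y := psum a t - psum a 0)); first by nra.
    apply: (le_lt_trans hPP); apply: (le_lt_trans (y := t * (LL a r r' + 1))); first by nra.
    by apply: (lt_le_trans ht'); rewrite ler_wpM2l // ltW.
  by rewrite ltr_pM2r.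
have t0r' : t0 <= r := ltW t0r.
rewrite /P (qQ t0 t0p t0r').
set Q0 := QQ a t0.
have e2 : 0 < e / 2 by apply: divr_gt0.
have [n hn] := Q_approx a0 apos rr' r'R (ltW t0p) t0r' e2.
have [C [C0 hC]] := g_lip a0 apos r0 rr' r'R n.
have /andP[Q00 Q01'] := Q01 a0 apos rr' r'R (ltW t0p) t0r'.
have [d2 [d20 hd2]] : exists d2, 0 < d2 /\ forall t, 0 < t -> t <= r ->
    `|t0 - t| < d2 -> QQ a t < Q0 + e.
  have [Q0e|Q0lt] : Q0 = 1 \/ Q0 < 1.
    by move: Q01'; rewrite le_eqVlt => /orP[/eqP|]; [left|right].
    exists 1; split => // t tp tr _.
    by have /andP[_ h] := Q01 a0 apos rr' r'R (ltW tp) tr; lra.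
  have [p0' p1' GF] := khin_props a0 apos t0p t0R.
  have GQ : G (khinchin a t0) Q0 = Q0.
    by rewrite GF ?Q00 ?Q01' // (Q_fix a0 apos r0 rr' r'R (ltW t0p) t0r').
  have P0 : 0 < psum a t0 by apply: (psi_gt0 a0 apos) => //; exact: ltW.
  case: (pselect (exists m, (2 <= m)%N /\ 0 < a m)) => [[m [m2 am]]|nom]; last first.
    exfalso.
    have k2 : forall k, (2 <= k)%N -> khinchin a t0 k = 0.
      move=> k k2; rewrite /khinchin.
      have -> : a k = 0; last by rewrite !mul0r.
      apply/eqP; rewrite eq_le a0 andbT leNgt; apply/negP => ak.
      by apply: nom; exists k.
    have kp : 0 < khinchin a t0 0%N by rewrite /khinchin expr0 mulr1 divr_gt0.
    have := @G_lin _ _ p0' p1' Q0 k2 kp (ltac:(by apply/andP)) GQ.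
    lra.
  set s := Num.min (Q0 + e / 2) ((Q0 + 1) / 2).
  have Qs : Q0 < s by rewrite lt_min; apply/andP; split; lra.
  have s1 : s < 1 by rewrite gt_min; apply/orP; right; lra.
  have s0 : 0 <= s by apply: le_trans (ltW Qs).
  have se : s <= Q0 + e / 2 by rewrite ge_min lexx.
  have pm : 0 < khinchin a t0 m.
    by rewrite /khinchin divr_gt0 // mulr_gt0 // exprn_gt0.
  have Gs := G_lt p0' p1' m2 pm Q00 GQ Qs s1.
  rewrite GF ?s0 ?(ltW s1) // in Gs.
  set eta := s - FF a t0 s.
  have eta0 : 0 < eta by rewrite /eta subr_gt0.
  have K20 := K2_ge0 a0 apos r0 rr' r'R.
  exists (eta / (K2 a r r' + 1)); split; first by apply: divr_gt0 => //; lra.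
  move=> t tp tr hd.
  have hF := FF_t a0 apos r0 rr' r'R (ltW tp) tr (ltW t0p) t0r' s0 (ltW s1).
  rewrite distrC in hd.
  have hd' : `|t - t0| * (K2 a r r' + 1) < eta by rewrite -ltr_pdivlMr //; lra.
  have Fts : FF a t s <= s.
    have := ler_norm (FF a t s - FF a t0 s).
    have : 0 <= `|t - t0| := normr_ge0 _.
    rewrite /eta in hd'; nra.
  have := Q_le a0 apos rr' r'R (ltW tp) tr s0 (ltW s1) Fts.
  lra.
exists (Num.min (Num.min t0 (e / 2 / (C + 1))) d2); split.
  rewrite !lt_min t0p d20 andbT /= divr_gt0 //; lra.
move=> t t_ge0 tr; rewrite !lt_min => /andP[/andP[h1 h2] h3].
have tp : 0 < t.
  by move: h1; rewrite ltr_norml => /andP[_ h]; lra.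
rewrite (qQ t tp tr) ltr_distlC; apply/andP; split; last exact: hd2.
have hc := hC t t0 (ltW tp) tr (ltW t0p) t0r'.
have h2' : `|t0 - t| * (C + 1) < e / 2 by rewrite -ltr_pdivlMr //; lra.
rewrite distrC in h2'.
have gq := g_le_Q a0 apos rr' r'R n (ltW tp) tr.
have := ler_norm (gg a t0 n - gg a t n).
rewrite distrC in hc.
have hCl : C * `|t - t0| <= `|t - t0| * (C + 1).
  by rewrite mulrDr mulr1 mulrC lerDl.
move=> hnorm; rewrite /Q0; lra.
Qed.
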